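(* Let $n\ge1$, $K=U(n)$ acting on $\mathcal{O}_\Lambda$ via $k\mapsto\mathrm{diag}(1,k)$, let $\mathrm{M}=\mathrm{diag}(\mu_1,\dots,\mu_n)$ with $\mu_1\ge\dots\ge\mu_n$, and let $p\in\mathcal{O}_\Lambda$ with $\Phi(p)=\mathrm{M}$, so that $p=\begin{pmatrix}c&\mathbf{z}^\dagger\\ \mathbf{z}&\mathrm{M}\end{pmatrix}$ with $\mathbf{z}\in\mathbb{C}^n$ (a column vector) and $c=\sum_{i=1}^{n+1}\lambda_i-\sum_{i=1}^n\mu_i$. Then $T_p(K\cdot p)^\omega$ (the $\omega_\Lambda$-orthogonal complement of the tangent space to the $K$-orbit in $T_p\mathcal{O}_\Lambda$) consists of exactly the matrices $$\begin{pmatrix}0&\mathbf{v}^\dagger\\ \mathbf{v}&0\end{pmatrix},\qquad \mathbf{v}=(c-\mathrm{M})\mathbf{x}+X\mathbf{z},$$ where $X\in\mathfrak{u}(n)$ and $\mathbf{x}\in\mathbb{C}^n$ range over those pairs satisfying $$0=\mathbf{x}^\dagger\mathbf{z}+\mathbf{z}^\dagger\mathbf{x},\qquad 0=\mathbf{x}\mathbf{z}^\dagger+\mathbf{z}\mathbf{x}^\dagger+[X,\mathrm{M}].$$ Moreover, $T_p(K\cdot p)\cap T_p(K\cdot p)^\omega$ consists of exactly the matrices $\begin{pmatrix}0&(Y\mathbf{z})^\dagger\\ Y\mathbf{z}&0\end{pmatrix}$ with $Y\in\mathfrak{k}_{\mathrm{M}}$.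
   Context: $\mathcal{H}_m$ denotes $m\times m$ Hermitian matrices, $\mathfrak{u}(n)$ skew-Hermitian matrices, $\dagger$ conjugate transpose. For a non-increasing real sequence $\lambda_1\ge\dots\ge\lambda_{n+1}$, $\mathcal{O}_\Lambda\subset\mathcal{H}_{n+1}$ is the set of Hermitian matrices with eigenvalues $\lambda_1,\dots,\lambda_{n+1}$, with symplectic form $(\omega_\Lambda)_p([X,p],[Y,p])=\frac{1}{\sqrt{-1}}\mathrm{Tr}(p[X,Y])$ for $X,Y\in\mathfrak{u}(n+1)$. $K=U(n)$ acts by $k\cdot p=\mathrm{diag}(1,k)\,p\,\mathrm{diag}(1,k)^\dagger$ with moment map $\Phi(p)=$ the bottom-right $n\times n$ principal submatrix of $p$ (using $\mathcal{H}_n\cong\mathfrak{u}(n)^*$, $X\mapsto(A\mapsto\frac{1}{\sqrt{-1}}\mathrm{Tr}(XA))$). $\mathfrak{k}=\mathfrak{u}(n)$ and $\mathfrak{k}_{\mathrm{M}}=\{Y\in\mathfrak{u}(n):[Y,\mathrm{M}]=0\}$. *)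

(* Defs.v *)
From HB Require Import structures.
From mathcomp Require Import all_boot all_order all_algebra.
Set Implicit Arguments. Unset Strict Implicit. Unset Printing Implicit Defensive.
Import Order.TTheory GRing.Theory Num.Theory.
Local Open Scope ring_scope.

(* Complex numbers: an arbitrary numClosedFieldType C (e.g. complex R for R a
   realType); conjugation is the library's z^*. *)

Definition dag (C : numClosedFieldType) m n (A : 'M[C]_(m, n)) : 'M[C]_(n, m) :=
  (map_mx (fun z => z^*) A)^T.

Definition comm (C : numClosedFieldType) n (A B : 'M[C]_n) : 'M[C]_n :=
  A *m B - B *m A.

Definition hermitian (C : numClosedFieldType) n (A : 'M[C]_n) : Prop :=
  dag A = A.

Definition skew_hermitian (C : numClosedFieldType) n (A : 'M[C]_n) : Prop :=
  dag A = - A.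

(* O_Lambda: Hermitian matrices whose eigenvalues (with multiplicity) are the
   lambda_i, i.e. whose characteristic polynomial is prod (X - lambda_i). *)
Definition coadj_orbit (C : numClosedFieldType) N (lam : 'I_N -> C)
  (p : 'M[C]_N) : Prop :=
  hermitian p /\ char_poly p = \prod_(i < N) ('X - (lam i)%:P).

(* KKS form: omega_p([X,p],[Y,p]) = (1/sqrt(-1)) Tr(p [X,Y]) *)
Definition omega (C : numClosedFieldType) N (p X Y : 'M[C]_N) : C :=
  \tr (p *m comm X Y) / 'i.

(* embedding of u(n) into u(1+n): Y |-> diag(0, Y), the infinitesimal
   generator of k |-> diag(1,k) *)
Definition embK (C : numClosedFieldType) n (Y : 'M[C]_n) : 'M[C]_(1 + n) :=
  block_mx 0 0 0 Y.

Definition tangent_Korbit (C : numClosedFieldType) n (p : 'M[C]_(1 + n))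
  (xi : 'M[C]_(1 + n)) : Prop :=
  exists Y : 'M[C]_n, skew_hermitian Y /\ xi = comm (embK Y) p.

(* T_p(K.p)^omega inside T_p O_Lambda = { [X,p] : X in u(1+n) } *)
Definition tangent_Korbit_omega (C : numClosedFieldType) n
  (p : 'M[C]_(1 + n)) (xi : 'M[C]_(1 + n)) : Prop :=
  exists X : 'M[C]_(1 + n), skew_hermitian X /\ xi = comm X p /\
    forall Y : 'M[C]_n, skew_hermitian Y -> omega p X (embK Y) = 0.

(* Main.v *)
Require Import Defs.
From HB Require Import structures.
From mathcomp Require Import all_boot all_order all_algebra.
Import Order.TTheory GRing.Theory Num.Theory.
Local Open Scope ring_scope.

Lemma dagE {C : numClosedFieldType} m n (A : 'M[C]_(m,n)) : dag A = (map_mx Num.conj_op A)^T.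
Proof. by []. Qed.
Lemma dagM {C : numClosedFieldType} m n k (A : 'M[C]_(m,n)) (B : 'M[C]_(n,k)) : dag (A *m B) = dag B *m dag A.
Proof. by rewrite !dagE map_mxM trmx_mul. Qed.
Lemma dagD {C : numClosedFieldType} m n (A B : 'M[C]_(m,n)) : dag (A + B) = dag A + dag B.
Proof. by rewrite !dagE map_mxD linearD. Qed.
Lemma dagN {C : numClosedFieldType} m n (A : 'M[C]_(m,n)) : dag (- A) = - dag A.
Proof. by rewrite !dagE map_mxN linearN. Qed.
Lemma dagB {C : numClosedFieldType} m n (A B : 'M[C]_(m,n)) : dag (A - B) = dag A - dag B.
Proof. by rewrite dagD dagN. Qed.
Lemma dagK {C : numClosedFieldType} m n (A : 'M[C]_(m,n)) : dag (dag A) = A.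
Proof. by apply/matrixP=> i j; rewrite !mxE conjCK. Qed.
Lemma dag0 {C : numClosedFieldType} m n : dag (0 : 'M[C]_(m,n)) = 0.
Proof. by apply/matrixP=> i j; rewrite !mxE conjC0. Qed.
Lemma dag_scalar {C : numClosedFieldType} {n : nat} (a : C) : dag (a%:M : 'M_n) = (a^*)%:M.
Proof. by apply/matrixP=> i j; rewrite !mxE eq_sym; case: eqP; rewrite ?conjC0 ?mulr1n ?mulr0n. Qed.
Lemma dag_block {C : numClosedFieldType} m1 m2 n1 n2 (A : 'M[C]_(m1,n1)) (B : 'M_(m1,n2)) (D : 'M_(m2,n1)) (E : 'M_(m2,n2)) :
  dag (block_mx A B D E) = block_mx (dag A) (dag D) (dag B) (dag E).
Proof. by rewrite !dagE map_block_mx tr_block_mx. Qed.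
Lemma dagZ {C : numClosedFieldType} m n (a : C) (A : 'M[C]_(m,n)) : dag (a *: A) = a^* *: dag A.
Proof. by apply/matrixP=> i j; rewrite !mxE rmorphM. Qed.

Lemma trace_comm {C : numClosedFieldType} {n : nat} (A B : 'M[C]_n) : \tr (comm A B) = 0.
Proof. by rewrite /comm raddfB /= mxtrace_mulC subrr. Qed.

Lemma herm_comm {C : numClosedFieldType} {n : nat} {X p : 'M[C]_n} : skew_hermitian X -> Defs.hermitian p ->
  Defs.hermitian (comm X p).
Proof.
rewrite /skew_hermitian /Defs.hermitian /comm => hX hp.
by rewrite dagB !dagM hX hp mulmxN mulNmx opprK addrC.
Qed.

Lemma herm_block {C : numClosedFieldType} {n : nat} {xi : 'M[C]_(1 + n)} : Defs.hermitian xi ->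
  xi = block_mx (ulsubmx xi) (dag (dlsubmx xi)) (dlsubmx xi) (drsubmx xi).
Proof.
rewrite /Defs.hermitian => h.
have := h; rewrite -{1 2}[xi]submxK dag_block => /eq_block_mx[_ e _ _].
by rewrite e submxK.
Qed.

Lemma herm_dr {C : numClosedFieldType} {n : nat} {xi : 'M[C]_(1 + n)} : Defs.hermitian xi -> Defs.hermitian (drsubmx xi).
Proof.
rewrite /Defs.hermitian => h.
by have := h; rewrite -{1 2}[xi]submxK dag_block => /eq_block_mx[_ _ _ e].
Qed.

Lemma herm_trace0 {C : numClosedFieldType} {n : nat} {W : 'M[C]_n} : Defs.hermitian W ->
  (forall Y, skew_hermitian Y -> \tr (W *m Y) = 0) -> W = 0.
Proof.
rewrite /Defs.hermitian => hW hY.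
have sk : skew_hermitian ('i *: W).
  by rewrite /skew_hermitian dagZ hW conjCi scaleNr.
have := hY _ sk; rewrite -scalemxAr mxtraceZ => /eqP.
rewrite mulf_eq0 (negPf (neq0Ci C)) /= => /eqP htr.
have e : \tr (W *m W) = \sum_i \sum_j `|W i j| ^+ 2.
  rewrite /mxtrace; apply: eq_bigr => i _; rewrite mxE; apply: eq_bigr => j _.
  have : dag W j i = W j i by rewrite hW.
  by rewrite !mxE normCK => <-.
move: htr; rewrite e => /eqP; rewrite psumr_eq0; last by move=> i _; apply: sumr_ge0 => j _; apply: exprn_ge0.
move=> /allP hall; apply/matrixP => i j; rewrite mxE.
have := hall i (mem_index_enum i) => /implyP /(_ isT).
rewrite psumr_eq0; last by move=> k _; apply: exprn_ge0.
move=> /allP /(_ j (mem_index_enum j)) /implyP /(_ isT).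
by rewrite expf_eq0 /= normr_eq0 => /eqP.
Qed.

Lemma omega_embK {C : numClosedFieldType} {n : nat} (p X : 'M[C]_(1 + n)) (Y : 'M[C]_n) :
  omega p X (embK Y) = - \tr (drsubmx (comm X p) *m Y) / 'i.
Proof.
rewrite /omega; congr (_ / _).
have -> : \tr (p *m comm X (embK Y)) = - \tr (comm X p *m embK Y).
  rewrite /comm mulmxBr mulmxBl !raddfB /= !mulmxA opprK addrC.
  by rewrite [\tr (p *m embK Y *m X)]mxtrace_mulC !mulmxA.
congr (- _).
rewrite -[comm X p]submxK /embK mulmx_block mxtrace_block !mulmx0 !add0r.
by rewrite block_mxKdr mxtrace0 add0r.
Qed.

Lemma omega_cond {C : numClosedFieldType} {n : nat} {p X : 'M[C]_(1 + n)} : skew_hermitian X -> Defs.hermitian p ->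
  (forall Y, skew_hermitian Y -> omega p X (embK Y) = 0) <->
  drsubmx (comm X p) = 0.
Proof.
move=> hX hp; split => [h | h Y _]; last by rewrite omega_embK h mul0mx mxtrace0 oppr0 mul0r.
apply: herm_trace0; first exact/herm_dr/herm_comm.
move=> Y hY; have := h Y hY; rewrite omega_embK => /eqP.
by rewrite mulf_eq0 invr_eq0 (negPf (neq0Ci C)) orbF oppr_eq0 => /eqP.
Qed.

Lemma embK_skew {C : numClosedFieldType} {n : nat} {Y : 'M[C]_n} : skew_hermitian Y -> skew_hermitian (embK Y).
Proof.
rewrite /skew_hermitian /embK => h.
by rewrite dag_block !dag0 h opp_block_mx !oppr0.
Qed.

Lemma comm_blocks {C : numClosedFieldType} {n : nat} (c a : C) (z w : 'M[C]_(n,1)) (M Xp : 'M_n) :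
  let p := block_mx (c%:M : 'M_1) (dag z) z M in
  let X := block_mx (a%:M : 'M_1) (- dag w) w Xp in
  [/\ ulsubmx (comm X p) = - (dag w *m z + dag z *m w),
      dlsubmx (comm X p) = (c%:M - M) *m w + (Xp - a%:M) *m z &
      drsubmx (comm X p) = w *m dag z + z *m dag w + comm (Xp - a%:M) M].
Proof.
rewrite /= /comm !mulmx_block opp_block_mx add_block_mx block_mxKul block_mxKdl block_mxKdr.
split.
- rewrite scalar_mxC opprD addrACA subrr add0r mulNmx -opprD. done.
- rewrite !mul_mx_scalar !mulmxBl !mul_scalar_mx.
  by rewrite opprD [- (a *: z) + _]addrC addrACA.
- rewrite mulmxBl mulmxBr mul_mx_scalar mul_scalar_mx mulmxN opprD opprK.
  rewrite opprB [X in _ = _ + X]addrA subrK -!addrA; congr (_ + _); by rewrite addrCA.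
Qed.
Lemma tr_coadj (C : numClosedFieldType) N (lam : 'I_N -> C) (p : 'M[C]_N) :
  (0 < N)%N -> coadj_orbit lam p -> \tr p = \sum_(i < N) lam i.
Proof.
move=> N0 [_ hc].
have h := char_poly_trace p N0; rewrite hc in h.
have sz : size (map lam (index_enum 'I_N)) = N.
  by rewrite size_map -[RHS]card_ord cardT enumT [index_enum _]unlock.
have e : \prod_(i < N) ('X - (lam i)%:P) = \prod_(x <- map lam (index_enum 'I_N)) ('X - x%:P).
  by rewrite big_map.
have := @coefPn_prod_XsubC _ (map lam (index_enum 'I_N)); rewrite sz -lt0n N0 => /(_ isT).
rewrite -e h big_map => /eqP.
by rewrite eqr_opp => /eqP.
Qed.

Lemma embK_block {C : numClosedFieldType} {n : nat} (Y : 'M[C]_n) :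
  embK Y = block_mx ((0:C)%:M) (- dag (0 : 'M[C]_(n,1))) 0 Y.
Proof. by rewrite /embK dag0 oppr0 raddf0. Qed.

Lemma skew_decomp {C : numClosedFieldType} {n : nat} {X : 'M[C]_(1 + n)} : skew_hermitian X ->
  exists a w Xp, [/\ X = block_mx ((a : C)%:M) (- dag w) w Xp, a^* = -a & dag Xp = -Xp].
Proof.
move=> hX; have := hX; rewrite /skew_hermitian -{1 2}[X]submxK dag_block opp_block_mx.
move=> /eq_block_mx[h1 h2 h3 h4].
exists (ulsubmx X 0 0), (dlsubmx X), (drsubmx X); split => //.
- by rewrite -mx11_scalar h2 opprK submxK.
- by have := congr1 (fun A : 'M[C]_1 => A 0 0) h1; rewrite !mxE.
Qed.

Lemma ul_zero {C : numClosedFieldType} {n : nat} {A B : 'M[C]_(1 + n)} :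
  drsubmx (comm A B) = 0 -> ulsubmx (comm A B) = 0.
Proof.
move=> h; have t := @trace_comm _ _ A B.
rewrite -[comm A B]submxK mxtrace_block h mxtrace0 addr0 trace_mx11 in t.
by apply/matrixP => i j; rewrite !ord1 t mxE.
Qed.

Theorem lemma4p3 (C : numClosedFieldType) (n : nat) (lam : 'I_(1 + n) -> C)
  (mu : 'I_n -> C) (p : 'M[C]_(1 + n)) :
  (1 <= n)%N ->
  (forall i, lam i \is Num.real) ->
  (forall i j : 'I_(1 + n), (i <= j)%N -> lam j <= lam i) ->
  (forall i, mu i \is Num.real) ->
  (forall i j : 'I_n, (i <= j)%N -> mu j <= mu i) ->
  coadj_orbit lam p ->
  drsubmx p = diag_mx (\row_i mu i) ->
  let M := diag_mx (\row_i mu i) in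
  let z : 'M[C]_(n, 1) := dlsubmx p in
  let c : C := \sum_(i < 1 + n) lam i - \sum_(i < n) mu i in
  (forall xi : 'M[C]_(1 + n),
     tangent_Korbit_omega p xi <->
     exists (X : 'M[C]_n) (x : 'M[C]_(n, 1)),
       [/\ skew_hermitian X,
           dag x *m z + dag z *m x = 0,
           x *m dag z + z *m dag x + comm X M = 0 &
           xi = block_mx 0 (dag ((c%:M - M) *m x + X *m z))
                         ((c%:M - M) *m x + X *m z) 0]) /\
  (forall xi : 'M[C]_(1 + n),
     (tangent_Korbit p xi /\ tangent_Korbit_omega p xi) <->
     exists Y : 'M[C]_n,
       [/\ skew_hermitian Y, comm Y M = 0 &
           xi = block_mx 0 (dag (Y *m z)) (Y *m z) 0]).
Proof.
move=> n1 hlam _ hmu _ hco hdr M z c.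
have hp : Defs.hermitian p := hco.1.
have := hp; rewrite /Defs.hermitian -{1 2}[p]submxK dag_block => /eq_block_mx[_ hur _ _].
have hcr : c^* = c.
  apply: conj_Creal; apply: rpredB; apply: rpred_sum => i _; [exact: hlam | exact: hmu].
have hul : ulsubmx p = c%:M.
  rewrite [LHS]mx11_scalar; congr (_%:M).
  have htr := @tr_coadj _ (1 + n) _ _ (ltn0Sn n) hco.
  rewrite -[p]submxK mxtrace_block trace_mx11 hdr mxtrace_diag in htr.
  have e : \sum_j (\row_i mu i) 0 j = \sum_i mu i by apply: eq_bigr => j _; rewrite mxE.
  by rewrite e in htr; rewrite /c -htr addrK.
have hpB : p = block_mx (c%:M) (dag z) z M by rewrite -[p]submxK hul -hur hdr.
split => xi; split.
- case=> X [hX [-> hom]].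
  have hdr0 := (omega_cond hX hp).1 hom.
  have hul0 := ul_zero hdr0.
  have hZ := herm_comm hX hp.
  have [a [w [Xp [eX ha hXp]]]] := skew_decomp hX.
  rewrite hpB eX in hdr0 hul0 hZ *.
  have [hu hd hr] := comm_blocks c a z w M Xp.
  exists (Xp - a%:M), w; split.
  + rewrite /skew_hermitian dagB hXp dag_scalar ha raddfN /=.
    by rewrite opprD.
  + by rewrite -[LHS]opprK -hu hul0 oppr0.
  + by rewrite -hr.
  + by rewrite [LHS](herm_block hZ) hul0 hdr0 hd.
- case=> X [x [hX hxz hxzM ->]].
  have hXb : skew_hermitian (block_mx ((0:C)%:M) (- dag x) x X).
    rewrite /skew_hermitian dag_block dag_scalar conjC0 dagN dagK hX.
    by rewrite opp_block_mx opprK raddf0 oppr0.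
  have hZ := herm_comm hXb hp.
  have [hu hd hr] := comm_blocks c 0 z x M X.
  have e0 : ((0:C)%:M : 'M_n) = 0 by apply/matrixP => i j; rewrite !mxE mul0rn.
  rewrite e0 subr0 in hd hr.
  have hdr0 : drsubmx (comm (block_mx ((0:C)%:M) (- dag x) x X) p) = 0.
    by rewrite hpB hr.
  exists (block_mx ((0:C)%:M) (- dag x) x X); split => //; split.
  + rewrite [RHS](herm_block hZ) (ul_zero hdr0) hdr0 hpB hd //.
  + by apply/(omega_cond hXb hp).
- case=> [[Y [hY ->]] [X [hX [eq hom]]]].
  have hdr0 := (omega_cond hX hp).1 hom; rewrite -eq in hdr0.
  have hZ := herm_comm (embK_skew hY) hp.
  have hul0 := ul_zero hdr0.
  rewrite embK_block hpB in hdr0 hul0 hZ *.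
  have [hu hd hr] := comm_blocks c 0 z 0 M Y.
  have e0 : ((0:C)%:M : 'M_n) = 0 by apply/matrixP => i j; rewrite !mxE mul0rn.
  rewrite e0 subr0 mulmx0 add0r in hd.
  rewrite e0 subr0 mul0mx dag0 mulmx0 !add0r in hr.
  rewrite ?dag0 ?oppr0 in hd hr hdr0 hul0 hZ *.
  exists Y; split => //; first by rewrite -hr.
  by rewrite [LHS](herm_block hZ) hul0 hdr0 hd.
- case=> Y [hY hYM ->].
  have hZ := herm_comm (embK_skew hY) hp.
  have [hu hd hr] := comm_blocks c 0 z 0 M Y.
  have e0 : ((0:C)%:M : 'M_n) = 0 by apply/matrixP => i j; rewrite !mxE mul0rn.
  rewrite e0 subr0 mulmx0 add0r in hd.
  rewrite e0 subr0 mul0mx dag0 mulmx0 !add0r in hr.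
  rewrite ?dag0 ?oppr0 in hd hr.
  have hdr0 : drsubmx (comm (embK Y) p) = 0 by rewrite embK_block dag0 oppr0 hpB hr.
  have eqx : block_mx 0 (dag (Y *m z)) (Y *m z) 0 = comm (embK Y) p.
    by rewrite [RHS](herm_block hZ) (ul_zero hdr0) hdr0 embK_block dag0 oppr0 hpB hd.
  rewrite eqx; split; first by exists Y.
  exists (embK Y); split; first exact: embK_skew.
  split => //; exact/(omega_cond (embK_skew hY) hp).
Qed.
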